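(* Let $\gamma\in\mathrm{SL}_2(\mathbb{Z})$ and $k\ge1$ with $\det(\mathrm{Id}_2-\gamma^k)\neq0$, so that $\operatorname{coker}(\mathrm{Id}_2-\gamma^k)=\mathbb{Z}^2/(\mathrm{Id}_2-\gamma^k)\mathbb{Z}^2$ is finite, and let $\gamma$ act on it by multiplication. Then for $1\le p<k$, the number of fixed points of $\gamma^p$ on $\operatorname{coker}(\mathrm{Id}_2-\gamma^k)$ equals $|\det(\mathrm{Id}_2-\gamma^d)|$, where $d=\gcd(k,p)$ if $\gamma$ has infinite order, and $d=\gcd(k,p,m)$ if $\gamma$ has finite order $m$. *)

(* Defs.v *)
From mathcomp Require Import all_boot all_order all_algebra.
Set Implicit Arguments. Unset Strict Implicit. Unset Printing Implicit Defensive.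
Import Order.TTheory GRing.Theory Num.Theory.
Local Open Scope ring_scope.

Definition coker_eq (A : 'M[int]_2) (v w : 'cV[int]_2) : Prop :=
  exists u : 'cV[int]_2, v - w = A *m u.

Definition coker_fixed (A h : 'M[int]_2) (v : 'cV[int]_2) : Prop :=
  coker_eq A (h *m v) v.

Definition num_fixed_points (A h : 'M[int]_2) (n : nat) : Prop :=
  exists s : seq 'cV[int]_2,
    [/\ size s = n,
        (forall i j : nat, (i < n)%N -> (j < n)%N ->
            coker_eq A (nth 0 s i) (nth 0 s j) -> i = j),
        (forall v, v \in s -> coker_fixed A h v) &
        (forall v, coker_fixed A h v -> exists2 w, w \in s & coker_eq A v w)].

Definition mx_order (g : 'M[int]_2) (m : nat) : Prop :=
  [/\ (0 < m)%N, g ^+ m = 1 & forall j : nat, (0 < j < m)%N -> g ^+ j != 1].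

Definition infinite_order (g : 'M[int]_2) : Prop :=
  forall j : nat, (0 < j)%N -> g ^+ j != 1.

(* Main.v *)
Require Import Defs.
From mathcomp Require Import all_boot all_order all_algebra.
From mathcomp Require Import zify.
Import Order.TTheory GRing.Theory Num.Theory.
Local Open Scope ring_scope.

Lemma mxM (A B : 'M[int]_2) (u : 'cV[int]_2) : (A * B) *m u = A *m (B *m u).
Proof. by rewrite -mulmxE mulmxA. Qed.

Lemma mx_inj0 (B : 'M[int]_2) (x : 'cV[int]_2) : \det B != 0 -> B *m x = 0 -> x = 0.
Proof.
move=> dB Bx.
have : \adj B *m (B *m x) = 0 by rewrite Bx mulmx0.
rewrite mulmxA mul_adj_mx mul_scalar_mx => /matrixP H.
apply/matrixP => i j; have := H i j; rewrite !mxE => /eqP.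
by rewrite mulf_eq0 (negbTE dB) /= => /eqP.
Qed.

Lemma mx_inj (B : 'M[int]_2) : \det B != 0 -> injective (mulmx B : 'cV[int]_2 -> 'cV[int]_2).
Proof.
move=> dB x y Hxy; apply/eqP; rewrite -subr_eq0; apply/eqP.
have := @mx_inj0 B (x - y) dB; rewrite mulmxBr Hxy subrr; apply.
by [].
Qed.

Definition reps (B : 'M[int]_2) (t : seq 'cV[int]_2) :=
  [/\ uniq t, {in t &, forall x y, coker_eq B x y -> x = y} &
      forall v, exists2 w, w \in t & coker_eq B v w].

Definition vec2 (x y : int) : 'cV[int]_2 :=
  \col_i (if (i : nat) == 0%N then x else y).

Definition dmx (d : seq int) : 'M[int]_2 := \matrix_(i, j) (d`_i *+ (i == j :> nat)).

Lemma dmxE d (u : 'cV[int]_2) :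
  dmx d *m u = vec2 (d`_0 * u 0 0) (d`_1 * u 1 0).
Proof.
apply/matrixP => i j; rewrite !mxE big_ord_recr big_ord1 /= !mxE.
case: i => [[|[|]]] //= Hi; rewrite mulr1n mulr0n mul0r ?addr0 ?add0r;
  by rewrite (ord1 j); do 2 f_equal; apply: val_inj.
Qed.

Lemma vec2E (u : 'cV[int]_2) : u = vec2 (u 0 0) (u 1 0).
Proof.
apply/matrixP => i j; rewrite !mxE (ord1 j).
case: i => [[|[|]]] //= Hi.
- by congr (u _ _); apply: val_inj.
- by congr (u _ _); apply: val_inj.
Qed.

Lemma vec2_inj x y x' y' : vec2 x y = vec2 x' y' -> x = x' /\ y = y'.
Proof.
move/matrixP => H; have := H 0 0; have := H 1 0; rewrite !mxE /=.
by move=> -> ->.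
Qed.

Lemma vec2B x y x' y' : vec2 x y - vec2 x' y' = vec2 (x - x') (y - y').
Proof. by apply/matrixP => i j; rewrite !mxE; case: ifP. Qed.

Lemma small_eq (a x y u : int) : 0 <= x < `|a|%:Z -> 0 <= y < `|a|%:Z ->
  x - y = a * u -> x = y.
Proof.
move=> /andP[x0 xa] /andP[y0 ya] E.
have [u0'|u0] := eqVneq u 0; first by move: E; rewrite u0' mulr0 => /eqP; rewrite subr_eq0 => /eqP.
exfalso.
have h1 : `|x - y| < `|a|%:Z.
  by rewrite ltr_norml; apply/andP; split; lia.
have h2 : `|a|%:Z <= `|a * u|.
  rewrite normrM -[X in X <= _]mulr1 abszE ler_wpM2l //.
  by rewrite -[1]/(1%:Z) lez_nat absz_gt0 //; rewrite absz_gt0.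
by move: h1; rewrite E abszE => /(le_lt_trans h2); rewrite ltxx.
Qed.

Lemma mem_iota_int (a n : nat) : (n \in iota 0 a) -> 0 <= n%:Z < a%:Z.
Proof. by rewrite mem_iota add0n /= ltz_nat. Qed.

Lemma reps_diag d : d`_0 != 0 -> d`_1 != 0 ->
  exists t, reps (dmx d) t /\ size t = muln (absz d`_0) (absz d`_1).
Proof.
move=> a0 b0.
exists [seq vec2 i%:Z j%:Z | i <- iota 0 `|d`_0|, j <- iota 0 `|d`_1|].
split; last by rewrite size_allpairs !size_iota.
split.
- apply: allpairs_uniq; rewrite ?iota_uniq //.
  by move=> [i j] [i' j'] _ _ /= /vec2_inj [[->] [->]].
- move=> x y /allpairsP [[i j] [/= /mem_iota_int Hi /mem_iota_int Hj ->]].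
  move=> /allpairsP [[i' j'] [/= /mem_iota_int Hi' /mem_iota_int Hj' ->]].
  move=> [u]; rewrite dmxE vec2B => /vec2_inj [E1 E2].
  by rewrite (small_eq _ _ _ _ Hi Hi' E1) (small_eq _ _ _ _ Hj Hj' E2).
- move=> v.
  exists (vec2 (modz (v 0 0) d`_0) (modz (v 1 0) d`_1)).
    rewrite -(gez0_abs (modz_ge0 _ a0)) -(gez0_abs (modz_ge0 _ b0)).
    apply: allpairs_f; rewrite mem_iota add0n /= -ltz_nat gez0_abs ?modz_ge0 //
      ?ltz_mod //.
  exists (vec2 (divz (v 0 0) d`_0) (divz (v 1 0) d`_1)).
  rewrite dmxE {1}(vec2E v) vec2B !mxE /=.
  by rewrite {1}(divz_eq (v 0 0) (d`_0)) {1}(divz_eq (v 1 0) (d`_1)) !addrK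
    [d`_0 * _]mulrC [d`_1 * _]mulrC.
Qed.

Lemma reps_transfer (B L D R : 'M[int]_2) t : L \in unitmx -> R \in unitmx ->
  B = L *m D *m R -> reps D t -> reps B (map (mulmx L) t).
Proof.
move=> uL uR -> [Ut Pt Ct]; split.
- by rewrite (map_inj_uniq (can_inj (mulKmx uL))).
- move=> _ _ /mapP[x0 Hx0 ->] /mapP[y0 Hy0 ->] [u].
  rewrite -mulmxBr -!mulmxA => /(can_inj (mulKmx uL)) E.
  by rewrite (Pt _ _ Hx0 Hy0) //; exists (R *m u).
- move=> v; have [w0 Hw0 [u0 E]] := Ct (invmx L *m v).
  exists (L *m w0); first exact: map_f.
  exists (invmx R *m u0).
  rewrite -!mulmxA mulKVmx // -E mulmxBr mulmxA.
  by rewrite mulmxV // mul1mx.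
Qed.

Lemma absz_unit (x : int) : x \is a GRing.unit -> `|x|%N = 1%N.
Proof. by case/orP => /eqP ->. Qed.

Lemma det_dmx d : \det (dmx d) = d`_0 * d`_1.
Proof.
have -> : dmx d = diag_mx (\row_i d`_i).
  by apply/matrixP => i j; rewrite !mxE.
by rewrite (@det_diag int 2) big_ord_recr big_ord1 /= !mxE.
Qed.

Lemma reps_exist (B : 'M[int]_2) : \det B != 0 ->
  exists t, reps B t /\ size t = `|\det B|%N.
Proof.
move=> dB.
have [L uL [R uR [d _ E]]] := int_Smith_normal_form B.
have ED : B = L *m dmx d *m R by [].
have Edet : \det B = \det L * (d`_0 * d`_1) * \det R by rewrite ED !det_mulmx det_dmx.
have a0 : d`_0 != 0 by apply: contraNneq dB => h; rewrite Edet h !(mul0r, mulr0).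
have b0 : d`_1 != 0 by apply: contraNneq dB => h; rewrite Edet h !(mul0r, mulr0).
have [t [Ht St]] := @reps_diag d a0 b0.
exists (map (mulmx L) t); split; first exact: reps_transfer ED Ht.
rewrite size_map St Edet !abszM.
rewrite unitmxE in uL; rewrite unitmxE in uR.
by rewrite (@absz_unit _ uL) (@absz_unit _ uR) mul1n muln1.
Qed.

Arguments reps_exist {B}.
Arguments mx_inj {B}.
Arguments mx_inj0 {B x}.

Lemma nfp_of_seq (A h : 'M[int]_2) s : uniq s ->
  {in s &, forall x y, coker_eq A x y -> x = y} ->
  (forall v, v \in s -> coker_fixed A h v) ->
  (forall v, coker_fixed A h v -> exists2 w, w \in s & coker_eq A v w) ->
  num_fixed_points A h (size s).
Proof.
move=> Us Ps Fs Cs; exists s; split => // i j Hi Hj E.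
apply/eqP; rewrite -(nth_uniq 0 Hi Hj Us); apply/eqP.
by apply: Ps => //; apply: mem_nth.
Qed.

Lemma main_count (B S h : 'M[int]_2) : \det B != 0 -> \det S != 0 ->
  B * S = S * B -> h = 1 - B -> num_fixed_points (B * S) h `|\det B|%N.
Proof.
move=> dB dS BS ->.
have [t [[Ut Pt Ct] St]] := reps_exist dB.
rewrite -St -(size_map (mulmx S)).
apply: nfp_of_seq.
- by rewrite (map_inj_uniq (mx_inj dS)).
- move=> _ _ /mapP[x0 H0 ->] /mapP[y0 H1 ->] [u].
  rewrite -mulmxBr BS mxM => /(mx_inj dS) E.
  by rewrite (Pt _ _ H0 H1) //; exists u.
- move=> _ /mapP[x0 _ ->]; exists (- x0).
  by rewrite mulmxBl mul1mx addrAC subrr add0r mxM !mulmxN.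
- move=> v [u]; rewrite mulmxBl mul1mx addrAC subrr add0r mxM => E.
  have : B *m (v + S *m u) = 0 by rewrite mulmxDr -E subrr.
  move/(mx_inj0 dB)/eqP; rewrite addr_eq0 => /eqP Ev.
  have [w0 Hw0 [u' E3]] := Ct (- u).
  exists (S *m w0); first exact: map_f.
  exists u'.
  by rewrite Ev -mulmxN -mulmxBr E3 BS mxM.
Qed.

Lemma nfp_ext (A h1 h2 : 'M[int]_2) n :
  (forall v, coker_fixed A h1 v <-> coker_fixed A h2 v) ->
  num_fixed_points A h1 n -> num_fixed_points A h2 n.
Proof.
move=> H [s [S1 S2 S3 S4]]; exists s; split => //.
- by move=> v /S3 /H.
- by move=> v /H /S4.
Qed.

Arguments nfp_ext {A h1 h2 n}.

Lemma count_div (g : 'M[int]_2) k d : (0 < d)%N -> (d %| k)%N ->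
  \det (1 - g ^+ k) != 0 ->
  num_fixed_points (1 - g ^+ k) (g ^+ d) `|\det (1 - g ^+ d)|%N.
Proof.
move=> d0 dk dA.
set h := g ^+ d; set n := (k %/ d)%N.
have Ek : g ^+ k = h ^+ n by rewrite /h /n -exprM mulnC divnK.
set S := \sum_(i < n) h ^+ i.
have E1 : 1 - h ^+ n = (1 - h) * S.
  by have := subrX1 h n => E; rewrite -opprB E -mulNr opprB.
have E2 : (1 - h) * S = S * (1 - h).
  rewrite mulrBl mulrBr mul1r mulr1; congr (_ - _).
  rewrite mulr_sumr mulr_suml; apply: eq_bigr => i _.
  by rewrite -exprS -exprSr.
rewrite Ek E1 in dA *.
move: dA; rewrite -mulmxE det_mulmx mulf_eq0 negb_or => /andP[dB dS].
apply: main_count => //.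
by rewrite opprB addrC subrK.
Qed.

Section Closure.
Variables (g : 'M[int]_2) (k : nat) (v : 'cV[int]_2).
Let P j := coker_eq (1 - g ^+ k) (g ^+ j *m v) v.

Lemma comm_A j : (1 - g ^+ k) * g ^+ j = g ^+ j * (1 - g ^+ k).
Proof. by rewrite mulrBl mulrBr mul1r mulr1 -!exprD addnC. Qed.

Lemma P0 : P 0.
Proof. by exists 0; rewrite expr0 mul1mx subrr mulmx0. Qed.

Lemma Pk : P k.
Proof. by exists (- v); rewrite mulmxN mulmxBl mul1mx opprB. Qed.

Lemma Padd i j : P i -> P j -> P (i + j).
Proof.
move=> [u1 E1] [u2 E2]; exists (g ^+ i *m u2 + u1).
rewrite exprD mxM mulmxDr -E1 -[(1 - g ^+ k) *m (g ^+ i *m u2)]mxM comm_A mxM -E2 mulmxBr.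
by rewrite addrA subrK.
Qed.

Lemma Psub i j : (j <= i)%N -> P i -> P j -> P (i - j).
Proof.
move=> ji [u1 E1] [u2 E2]; exists (u1 - g ^+ (i - j) *m u2).
rewrite mulmxBr -E1 -mxM comm_A mxM -E2 mulmxBr -mxM -exprD subnK //.
by rewrite opprB [X in _ = X]addrC addrA subrK.
Qed.

Lemma Pmul c a : P a -> P (c * a).
Proof.
move=> Pa; elim: c => [|c IH]; first by rewrite mul0n; exact: P0.
by rewrite mulSn; apply: Padd.
Qed.

Lemma Pgcd a b : P a -> P b -> P (gcdn a b).
Proof.
have H : forall n b a, (b <= n)%N -> P a -> P b -> P (gcdn a b).
  elim=> [|n IH] b' a' Hb Pa Pb.
    by move: Hb; rewrite leqn0 => /eqP ->; rewrite gcdn0.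
  have [->|b0] := eqVneq b' 0%N; first by rewrite gcdn0.
  rewrite -gcdn_modl gcdnC; apply: IH => //.
    have : (0 < b')%N by rewrite lt0n.
by move=> /(ltn_pmod a'); lia.
  have -> : (a' %% b' = a' - a' %/ b' * b')%N by rewrite {2}(divn_eq a' b') addKn.
  by apply: Psub; [exact: leq_trunc_div | exact: Pa | exact: Pmul].
by move=> Pa Pb; apply: (H b).
Qed.

Lemma Pm m : g ^+ m = 1 -> P m.
Proof. by move=> gm; exists 0; rewrite gm mul1mx subrr mulmx0. Qed.

Lemma Pdvd a b : (a %| b)%N -> P a -> P b.
Proof. by move=> /dvdnP[c ->]; apply: Pmul. Qed.

End Closure.

Theorem lemma3p8 (g : 'M[int]_2) (k p : nat) :
  \det g = 1 -> (1 <= k)%N -> \det (1 - g ^+ k) != 0 ->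
  (1 <= p)%N -> (p < k)%N ->
  (infinite_order g ->
     num_fixed_points (1 - g ^+ k) (g ^+ p) `|\det (1 - g ^+ gcdn k p)|%N) /\
  (forall m : nat, mx_order g m ->
     num_fixed_points (1 - g ^+ k) (g ^+ p)
       `|\det (1 - g ^+ gcdn (gcdn k p) m)|%N).
Proof.
move=> _ k1 dA p1 pk.
have key : forall d, (0 < d)%N -> (d %| k)%N -> (d %| p)%N ->
    (forall v, coker_fixed (1 - g ^+ k) (g ^+ p) v ->
               coker_fixed (1 - g ^+ k) (g ^+ d) v) ->
    num_fixed_points (1 - g ^+ k) (g ^+ p) `|\det (1 - g ^+ d)|%N.
  move=> d d0 dk dp H; apply: (nfp_ext _ (count_div g k d d0 dk dA)) => v.
  by split; [exact: Pdvd dp | exact: H].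
split.
- move=> _; apply: key.
  + by rewrite gcdn_gt0 k1.
  + exact: dvdn_gcdl.
  + exact: dvdn_gcdr.
  + by move=> v Hp; exact: (Pgcd g k v k p (Pk g k v) Hp).
- move=> m [m0 gm _]; apply: key.
  + by rewrite gcdn_gt0 m0 orbT.
  + exact: dvdn_trans (dvdn_gcdl _ _) (dvdn_gcdl _ _).
  + exact: dvdn_trans (dvdn_gcdl _ _) (dvdn_gcdr _ _).
  + by move=> v Hp; exact: (Pgcd g k v _ m (Pgcd g k v k p (Pk g k v) Hp) (Pm g k v m gm)).
Qed.
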